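(* Let $(P,\leq,{}',0,1)$ be a generalized orthomodular poset and define $R(x,y):=LU(x',y)$ for all $x,y\in P$. Then $(P,\leq,{}',R,0,1)$ is a conditionally operator residuated poset satisfying operator divisibility. Explicitly, for all $x,y,z\in P$: (i) if $x'\leq y$ and $L(x,y)\subseteq L(z)$ then $L(x)\subseteq R(y,z)$; (ii) if $z\leq y$ and $L(x)\subseteq R(y,z)$ then $L(x,y)\subseteq L(z)$; (iii) $R(x,0)=L(x')$; (iv) $R(x'',x)=P$; and moreover $x\leq y$ implies $L(y,U(R(y,x)))=L(x)$.
   Context: For a poset $(P,\leq)$ and $A\subseteq P$: $L(A):=\{x\in P\mid x\leq a\text{ for all }a\in A\}$, $U(A):=\{x\in P\mid a\leq x\text{ for all }a\in A\}$. We write $L(a,b)$ for $L(\{a,b\})$, $L(a,B)$ for $L(\{a\}\cup B)$, $LU(A)$ for $L(U(A))$, $ULU(A)=U(L(U(A)))$, etc.; for $A\subseteq P$, $A':=\{x'\mid x\in A\}$. An orthoposet is a bounded poset $(P,\leq,{}',0,1)$ with a unary operation $'$ that is an antitone involution ($x''=x$, and $x\leq y\Rightarrow y'\leq x'$) and a complementation ($L(x,x')=\{0\}$, $U(x,x')=\{1\}$). A generalized orthomodular poset is an orthoposet satisfying: for all $x,y\in P$, $x\leq y$ implies $U(y)=U(x,L(x',y))$. A conditionally operator residuated poset is a tuple $(P,\leq,{}',R,0,1)$ where $(P,\leq,0,1)$ is a bounded poset, $'$ is an antitone unary operation, and $R:P^2\to 2^P$ satisfies (i)–(iv) above; it satisfies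 operator divisibility if $x\leq y$ implies $L(y,U(R(y,x)))=L(x)$. *)

(* Defs.v *)
Set Implicit Arguments.

Section Defs.
Variable T : Type.
Variable le : T -> T -> Prop.

Definition set_sub (A B : T -> Prop) : Prop := forall x, A x -> B x.
Definition set_eq (A B : T -> Prop) : Prop := forall x, A x <-> B x.
Definition set_full : T -> Prop := fun _ => True.
Definition set1 (a : T) : T -> Prop := fun x => x = a.
Definition set2 (a b : T) : T -> Prop := fun x => x = a \/ x = b.
Definition set1U (a : T) (B : T -> Prop) : T -> Prop := fun x => x = a \/ B x.

Definition Lc (A : T -> Prop) : T -> Prop := fun x => forall a, A a -> le x a.
Definition Uc (A : T -> Prop) : T -> Prop := fun x => forall a, A a -> le a x.

Definition is_poset : Prop :=
  (forall x, le x x) /\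
  (forall x y, le x y -> le y x -> x = y) /\
  (forall x y z, le x y -> le y z -> le x z).

Definition is_bounded_poset (zero one : T) : Prop :=
  is_poset /\ (forall x, le zero x) /\ (forall x, le x one).

Definition is_orthoposet (comp : T -> T) (zero one : T) : Prop :=
  is_bounded_poset zero one /\
  (forall x, comp (comp x) = x) /\
  (forall x y, le x y -> le (comp y) (comp x)) /\
  (forall x, set_eq (Lc (set2 x (comp x))) (set1 zero)) /\
  (forall x, set_eq (Uc (set2 x (comp x))) (set1 one)).

Definition is_gen_orthomodular_poset (comp : T -> T) (zero one : T) : Prop :=
  is_orthoposet comp zero one /\
  (forall x y, le x y ->
     set_eq (Uc (set1 y)) (Uc (set1U x (Lc (set2 (comp x) y))))).

Definition Rop (comp : T -> T) (x y : T) : T -> Prop :=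
  Lc (Uc (set2 (comp x) y)).

End Defs.

(* Main.v *)
Require Import Defs.

Theorem mainTheorem1 (T : Type) (le : T -> T -> Prop) (comp : T -> T)
    (zero one : T) :
  is_gen_orthomodular_poset le comp zero one ->
  let R := Rop le comp in
  (* (i) *)
  (forall x y z, le (comp x) y ->
     set_sub (Lc le (set2 x y)) (Lc le (set1 z)) ->
     set_sub (Lc le (set1 x)) (R y z)) /\
  (* (ii) *)
  (forall x y z, le z y ->
     set_sub (Lc le (set1 x)) (R y z) ->
     set_sub (Lc le (set2 x y)) (Lc le (set1 z))) /\
  (* (iii) *)
  (forall x, set_eq (R x zero) (Lc le (set1 (comp x)))) /\
  (* (iv) *)
  (forall x, set_eq (R (comp (comp x)) x) (@set_full T)) /\
  (* operator divisibility *)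
  (forall x y, le x y ->
     set_eq (Lc le (set1U y (Uc le (R y x)))) (Lc le (set1 x))).
Proof.
  intros [[[[Hrefl [Hanti Htr]] [H0 H1]] [Hinv [Hcomp [HL HU]]]] HG] R.
  unfold R, Rop, set_sub, set_eq, Lc, Uc, set1, set2, set1U, set_full in *.
  assert (K : forall y z w, le z y -> le w y ->
    (forall u, (forall a, a = comp y \/ a = z -> le a u) -> le w u) -> le w z).
  { intros y z w Hzy Hwy Hw.
    pose proof (HG (comp y) (comp z) (Hcomp _ _ Hzy)) as G.
    rewrite Hinv in G.
    assert (Hw' : le (comp z) (comp w)).
    { apply (proj2 (G (comp w))).
      intros a [-> | Ha].
      - apply Hcomp; exact Hwy.
      - rewrite <- (Hinv a). apply Hcomp. apply Hw.
        intros b [-> | ->].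
        + apply Hcomp. apply Ha. auto.
        + rewrite <- (Hinv z). apply Hcomp. apply Ha. auto.
      - reflexivity. }
    rewrite <- (Hinv w), <- (Hinv z). apply Hcomp. exact Hw'. }
  split; [|split; [|split; [|split]]].
  - intros x y z Hxy Hsub w Hw u Hu.
    pose proof (HG (comp y) x) as G.
    rewrite Hinv in G.
    assert (Hyx : le (comp y) x).
    { rewrite <- (Hinv x). apply Hcomp. exact Hxy. }
    specialize (G Hyx).
    assert (Hxu : le x u).
    { apply (proj2 (G u)). intros a [-> | Ha].
      - apply Hu. auto.
      - apply Htr with z. apply (Hsub a).
        + intros b [-> | ->]; apply Ha; auto.
        + reflexivity.
        + apply Hu. auto.
      - reflexivity. }
    apply Htr with x; auto.
  - intros x y z Hzy Hsub w Hw a ->.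
    apply (K y z w Hzy); [apply Hw; auto|].
    apply (Hsub w). intros b ->. apply Hw. auto.
  - intros x w; split.
    + intros Hw a ->. apply Hw. intros b [-> | ->]; auto.
    + intros Hw u Hu. apply Htr with (comp x).
      * apply Hw. reflexivity.
      * apply Hu. auto.
  - intros x w; split; [auto|]. intros _ u Hu.
    rewrite Hinv in Hu.
    assert (u = one) as ->.
    { apply (proj1 (HU x u)). intros a [-> | ->]; apply Hu; auto. }
    auto.
  - intros x y Hxy w; split.
    + intros Hw a ->. apply (K y x w Hxy); [apply Hw; auto|].
      intros u Hu. apply Hw. right. intros v Hv. apply Hv. exact Hu.
    + intros Hw a [-> | Ha].
      * apply Htr with x; auto.
      * apply Htr with x; [apply Hw; auto|]. apply Ha.
        intros u Hu. apply Hu. auto.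
Qed.
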